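(* Let $X$ and $Y$ be $\mathbb{N}$-valued random variables with $P\{X=0\}\ne1$, $P\{Y=0\}\neq 1$ and $\mathbb{E}[X^2+Y^2]<+\infty$. Let $f_t$ be the solution of the kinetic equation with initial probability density $f_0$ on $\mathbb{N}$ with mean $m_0$ and $\mathrm{Var}(f_0)<+\infty$. Set $\alpha_1=\mathbb{E}[X]+\mathbb{E}[Y]-1$, $\alpha_2=\mathbb{E}[X]^2+\mathbb{E}[Y]^2-1$, $\beta=\mathrm{Var}(X)+\mathrm{Var}(Y)$, $\gamma=\mathbb{E}[X]\mathbb{E}[Y]$. Then for every $t>0$ $$\begin{aligned}\mathrm{Var}(f_t)={}&M_2(f_0)e^{\alpha_2t}-m_0^2e^{2\alpha_1t}+\beta m_0\Big[\frac{e^{\alpha_1t}-e^{\alpha_2t}}{\alpha_1-\alpha_2}\mathbb{I}\{\alpha_1\ne\alpha_2\}+te^{\alpha_2t}\mathbb{I}\{\alpha_1=\alpha_2\}\Big]\\&+2\gamma m_0^2\Big[\frac{e^{2\alpha_1t}-e^{\alpha_2t}}{2\alpha_1-\alpha_2}\mathbb{I}\{2\alpha_1\ne\alpha_2\}+te^{\alpha_2t}\mathbb{I}\{2\alpha_1=\alpha_2\}\Big].\end{aligned}$$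
   Context: $M_2(f)=\sum_v v^2f(v)$, $\mathrm{Var}(f)=M_2(f)-M_1(f)^2$, $\mathbb{I}$ is the indicator function. The kinetic equation is $\partial_t\hat f_t(z)=\hat f_t(\hat p_X(z))\hat f_t(\hat p_Y(z))-\hat f_t(z)$, $z\in[0,1]$, $t>0$, for $\hat f_t(z)=\sum_vz^vf_t(v)$, with $\hat p_X(z)=\mathbb{E}[z^X]$, $\hat p_Y(z)=\mathbb{E}[z^Y]$; it has a unique global solution for each initial probability density (equivalently $\partial_tf_t=Q^+(f_t,f_t)-f_t$ with $Q^+(f,g)(v)=P\{\sum_{i=1}^{V_1}Y_i+\sum_{i=1}^{V_2}X_i=v\}$, $V_1\sim f$, $V_2\sim g$, $X_i$ i.i.d. $\sim X$, $Y_i$ i.i.d. $\sim Y$, all independent). *)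

(* Defs.v *)
From Stdlib Require Import Reals.
From Coquelicot Require Import Coquelicot.
Open Scope R_scope.

Definition is_pdens (f : nat -> R) : Prop :=
  (forall v, 0 <= f v) /\ is_series f 1.

Definition gf (f : nat -> R) (z : R) : R := Series (fun v => f v * z ^ v).

Definition M1 (f : nat -> R) : R := Series (fun v => INR v * f v).
Definition M2 (f : nat -> R) : R := Series (fun v => (INR v) ^ 2 * f v).
Definition Varf (f : nat -> R) : R := M2 f - (M1 f) ^ 2.

Definition finite_M2 (f : nat -> R) : Prop := ex_series (fun v => (INR v) ^ 2 * f v).

(* (f_t)_{t>=0} is the solution of the kinetic equation
     d/dt \hat f_t(z) = \hat f_t(\hat p_X(z)) \hat f_t(\hat p_Y(z)) - \hat f_t(z),
   z in [0,1], t > 0, with initial datum f0: each f_t is a probability density,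
   f_0 = f0, t |-> \hat f_t(z) is right-continuous at 0 and differentiable on
   (0,+oo) with the above derivative. *)
Definition kinetic_solution (pX pY f0 : nat -> R) (f : R -> nat -> R) : Prop :=
  (forall v, f 0 v = f0 v) /\
  (forall t, 0 <= t -> is_pdens (f t)) /\
  (forall z, 0 <= z <= 1 ->
     filterlim (fun t => gf (f t) z) (at_right 0) (locally (gf f0 z)) /\
     (forall t, 0 < t ->
        is_derive (fun s => gf (f s) z) t
          (gf (f t) (gf pX z) * gf (f t) (gf pY z) - gf (f t) z))).

Definition phi (a b t : R) : R :=
  if Req_EM_T a b then t * exp (b * t) else (exp (a * t) - exp (b * t)) / (a - b).

(* Main.v *)
Require Import Defs.
From Stdlib Require Import Reals Lra Lia Psatz.
From Coquelicot Require Import Coquelicot.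
Open Scope R_scope.

Lemma ex_series_le_R (a b : nat -> R) :
  (forall n, 0 <= a n <= b n) -> ex_series b -> ex_series a.
Proof.
  intros H Hb. apply (ex_series_le a b); auto.
  intro n. change (norm (a n)) with (Rabs (a n)).
  rewrite Rabs_pos_eq; apply H.
Qed.

Lemma ex_series_mult_l c (a : nat -> R) : ex_series a -> ex_series (fun n => c * a n).
Proof. intros H. apply (ex_series_scal_l c a) in H. exact H. Qed.

Lemma Series_zero : Series (fun _ => 0) = 0.
Proof.
  rewrite (Series_ext _ (fun n => 0 * 0)) by (intro; ring).
  rewrite Series_scal_l. ring.
Qed.

Lemma Series_nonneg (a : nat -> R) : (forall n, 0 <= a n) -> ex_series a -> 0 <= Series a.
Proof.
  intros Ha Hex. rewrite <- Series_zero. apply Series_le; auto.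
  intro; split; [lra|apply Ha].
Qed.

Lemma sum_le_Series (a : nat -> R) N :
  (forall n, 0 <= a n) -> ex_series a -> sum_f_R0 a N <= Series a.
Proof.
  intros Ha Hex.
  rewrite (Series_incr_n a (S N)); [|lia|auto]. simpl.
  assert (0 <= Series (fun k => a (S (N + k)))).
  { apply Series_nonneg. intro; apply Ha.
    apply (ex_series_incr_n a (S N)) in Hex. exact Hex. }
  lra.
Qed.

Lemma ex_series_bounded (a : nat -> R) B :
  (forall n, 0 <= a n) -> (forall N, sum_f_R0 a N <= B) ->
  ex_series a /\ Series a <= B.
Proof.
  intros Ha HB.
  destruct (growing_cv (sum_f_R0 a)) as [l Hl].
  { intro n. simpl. specialize (Ha (S n)). lra. }
  { exists B. intros x [n ->]. apply HB. }
  assert (Hs : is_series a l). { apply is_series_Reals. exact Hl. }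
  split. exists l; exact Hs.
  rewrite (is_series_unique a l Hs).
  assert (Hl' : is_lim_seq (sum_n a) l) by exact Hs.
  assert (H := is_lim_seq_le (sum_n a) (fun _ => B) l B).
  simpl in H. apply H. intro n. rewrite sum_n_Reals. apply HB.
  exact Hl'. apply is_lim_seq_const.
Qed.

Fixpoint Dk (z : R) (k : nat) : R :=
  match k with O => 0 | S k => Dk z k + z ^ k end.
Fixpoint Ck (z : R) (k : nat) : R :=
  match k with O => 0 | S k => Ck z k + Dk z k end.

Lemma pow01 z k : 0 <= z <= 1 -> 0 <= z ^ k <= 1.
Proof.
  intros Hz. induction k; simpl; [lra|]. nra.
Qed.

Lemma Dk_id z k : 1 - z ^ k = (1 - z) * Dk z k.
Proof. induction k; simpl; [ring|]. nra. Qed.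

Lemma Ck_id z k : INR k - Dk z k = (1 - z) * Ck z k.
Proof.
  induction k; simpl Dk; simpl Ck; [simpl; ring|].
  rewrite S_INR. rewrite Rmult_plus_distr_l, <- IHk, <- Dk_id. ring.
Qed.

Lemma Dk_bnd z k : 0 <= z <= 1 -> 0 <= Dk z k <= INR k.
Proof.
  intros Hz. induction k; simpl Dk; [simpl; lra|].
  rewrite S_INR. pose proof (pow01 z k Hz). lra.
Qed.

Lemma Ck_bnd z k : 0 <= z <= 1 -> 0 <= Ck z k /\ 2 * Ck z k <= INR k * (INR k - 1).
Proof.
  intros Hz. induction k; simpl Ck; [simpl; lra|].
  rewrite S_INR. pose proof (Dk_bnd z k Hz). pose proof (pos_INR k). nra.
Qed.

Lemma Ck_low z k : 0 <= z <= 1 -> INR k * (INR k - 1) / 2 - Ck z k <= INR k ^ 3 * (1 - z).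
Proof.
  intros Hz. induction k; simpl Ck; [simpl; lra|].
  rewrite S_INR. pose proof (Ck_id z k). pose proof (Ck_bnd z k Hz).
  pose proof (pos_INR k).
  assert (Dk z k = INR k - (1 - z) * Ck z k) by lra.
  assert ((1-z) * Ck z k <= (1-z) * (INR k * INR k)) by nra.
  nra.
Qed.

Lemma Dk_one k : Dk 1 k = INR k.
Proof. induction k; simpl Dk; [simpl; ring|]. rewrite pow1, S_INR; lra. Qed.

Section PD.
Variable p : nat -> R.
Hypothesis Hp : is_pdens p.

Lemma pd_nn n : 0 <= p n.
Proof. apply Hp. Qed.
Lemma pd_ex : ex_series p.
Proof. exists 1; apply Hp. Qed.
Lemma pd_sum : Series p = 1.
Proof. apply is_series_unique; apply Hp. Qed.

Lemma pd_gf_ex z : 0 <= z <= 1 -> ex_series (fun v => p v * z ^ v).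
Proof.
  intros Hz. apply (ex_series_le_R _ p); [|apply pd_ex].
  intro n. pose proof (pow01 z n Hz). pose proof (pd_nn n). nra.
Qed.

Lemma pd_gf_bnd z : 0 <= z <= 1 -> 0 <= gf p z <= 1.
Proof.
  intros Hz. unfold gf. split.
  apply Series_nonneg; [|apply pd_gf_ex; auto].
  intro n. pose proof (pow01 z n Hz). pose proof (pd_nn n). nra.
  rewrite <- pd_sum. apply Series_le; [|apply pd_ex].
  intro n. pose proof (pow01 z n Hz). pose proof (pd_nn n). nra.
Qed.

Lemma pd_gfD z : 0 <= z < 1 ->
  ex_series (fun k => p k * Dk z k) /\ 1 - gf p z = (1 - z) * Series (fun k => p k * Dk z k).
Proof.
  intros Hz.
  assert (Hex : ex_series (fun k => p k * Dk z k)).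
  { apply (ex_series_le_R _ (fun k => p k * / (1 - z))).
    - intro n. pose proof (Dk_bnd z n ltac:(lra)). pose proof (pd_nn n).
      pose proof (Dk_id z n). pose proof (pow01 z n ltac:(lra)).
      split. nra.
      apply Rmult_le_compat_l; auto.
      apply (Rmult_le_reg_l (1 - z)); [lra|]. rewrite Rinv_r by lra. lra.
    - apply ex_series_scal_r, pd_ex. }
  split; auto.
  unfold gf. rewrite <- pd_sum at 1. rewrite <- Series_minus; [|apply pd_ex|apply pd_gf_ex; lra].
  rewrite <- Series_scal_l. apply Series_ext. intro n.
  replace (p n - p n * z^n) with (p n * (1 - z^n)) by ring. rewrite Dk_id; ring.
Qed.

Hypothesis Hm : finite_M2 p.

Lemma pd_M1_ex : ex_series (fun v => INR v * p v).
Proof.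
  apply (ex_series_le_R _ (fun v => INR v ^2 * p v)); [|exact Hm]. intro n; split; cbv beta.
  pose proof (pos_INR n); pose proof (pd_nn n); nra.
  pose proof (pos_INR n); pose proof (pd_nn n).
  destruct n. simpl; lra. rewrite S_INR in *. pose proof (pos_INR n). nra.
Qed.

Lemma pd_D_ex z : 0 <= z <= 1 -> ex_series (fun k => p k * Dk z k).
Proof.
  intros Hz. apply (ex_series_le_R _ (fun v => INR v * p v)); [|exact pd_M1_ex]. intro n; split; cbv beta.
  pose proof (Dk_bnd z n Hz); pose proof (pd_nn n); nra.
  pose proof (Dk_bnd z n Hz); pose proof (pd_nn n); nra.
Qed.

Lemma pd_C_ex z : 0 <= z <= 1 -> ex_series (fun k => p k * Ck z k).
Proof.
  intros Hz. apply (ex_series_le_R _ (fun v => INR v ^2 * p v)); [|exact Hm]. intro n; split; cbv beta.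
  pose proof (Ck_bnd z n Hz); pose proof (pd_nn n); nra.
  pose proof (Ck_bnd z n Hz); pose proof (pd_nn n); pose proof (pos_INR n); nra.
Qed.

Lemma pd_gf_eq z : 0 <= z <= 1 -> gf p z = 1 - (1 - z) * Series (fun k => p k * Dk z k).
Proof.
  intros Hz. unfold gf. rewrite <- pd_sum at 1. rewrite <- Series_scal_l, <- Series_minus.
  apply Series_ext. intro n.
  replace (p n * z^n) with (p n - p n * (1 - z^n)) by ring. rewrite Dk_id; ring.
  apply pd_ex. apply ex_series_mult_l, pd_D_ex; auto.
Qed.

Lemma pd_D_eq z : 0 <= z <= 1 -> Series (fun k => p k * Dk z k) = M1 p - (1 - z) * Series (fun k => p k * Ck z k).
Proof.
  intros Hz. unfold M1. rewrite <- Series_scal_l, <- Series_minus.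
  apply Series_ext. intro n.
  replace (p n * Dk z n) with (INR n * p n - p n * (INR n - Dk z n)) by ring. rewrite Ck_id; ring.
  apply pd_M1_ex. apply ex_series_mult_l, pd_C_ex; auto.
Qed.

Definition F2 := (M2 p - M1 p) / 2.

Lemma pd_F2_ser : is_series (fun k => p k * (INR k * (INR k - 1) / 2)) F2.
Proof.
  assert (E : ex_series (fun k => p k * (INR k * (INR k - 1) / 2))).
  { apply (ex_series_le_R _ (fun k => INR k ^ 2 * p k * / 2)).
    intro n; pose proof (pos_INR n); pose proof (pd_nn n). split.
    destruct n. simpl; lra. rewrite S_INR in *. pose proof (pos_INR n). nra. nra.
    apply ex_series_scal_r, Hm. }
  replace F2 with (Series (fun k => p k * (INR k * (INR k - 1) / 2))).
  apply Series_correct; auto.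
  unfold F2, M1, M2. rewrite <- Series_minus. unfold Rdiv. rewrite <- Series_scal_r.
  apply Series_ext; intro; field. exact Hm. apply pd_M1_ex.
Qed.

Lemma pd_C_bnd z : 0 <= z <= 1 -> 0 <= Series (fun k => p k * Ck z k) <= F2.
Proof.
  intros Hz. split.
  apply Series_nonneg; [|apply pd_C_ex; auto].
  intro n; pose proof (Ck_bnd z n Hz); pose proof (pd_nn n); nra.
  rewrite <- (is_series_unique _ _ pd_F2_ser). apply Series_le.
  intro n; pose proof (Ck_bnd z n Hz); pose proof (pd_nn n); nra.
  eexists; apply pd_F2_ser.
Qed.

Lemma pd_C_unif eps : 0 < eps -> exists eta, 0 < eta /\
  forall z, 0 <= z <= 1 -> 1 - z <= eta -> F2 - Series (fun k => p k * Ck z k) <= eps.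
Proof.
  intros He.
  set (q := fun k => p k * (INR k * (INR k - 1) / 2)).
  assert (Hq := pd_F2_ser). fold q in Hq.
  assert (Hl : is_lim_seq (sum_n q) F2) by exact Hq.
  apply is_lim_seq_spec in Hl.
  destruct (Hl (mkposreal (eps/2) ltac:(lra))) as [N HN].
  specialize (HN N (le_n _)). simpl in HN. rewrite sum_n_Reals in HN.
  set (Q := sum_f_R0 (fun k => p k * INR k ^ 3) N).
  assert (HQ : 0 <= Q). { apply cond_pos_sum. intro n. pose proof (pd_nn n); pose proof (pos_INR n). apply Rmult_le_pos; auto. apply pow_le; auto. }
  exists (eps / (2 * (Q + 1))). split. apply Rdiv_lt_0_compat; lra.
  intros z Hz Hx.
  assert (Exq : ex_series q) by (eexists; exact Hq).
  assert (Exc := pd_C_ex z Hz).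
  assert (Ed : ex_series (fun k => q k - p k * Ck z k)).
  { apply (ex_series_minus q). auto. auto. }
  rewrite <- (is_series_unique _ _ Hq).
  rewrite <- Series_minus by auto.
  rewrite (Series_incr_n _ (S N)) by (auto; lia). simpl Init.Nat.pred.
  assert (T1 : sum_f_R0 (fun k => q k - p k * Ck z k) N <= Q * (1 - z)).
  { unfold Q. rewrite Rmult_comm, scal_sum. apply sum_Rle. intros n _. unfold q.
    pose proof (Ck_low z n Hz). pose proof (pd_nn n). nra. }
  assert (T2 : Series (fun k => q (S N + k)%nat - p (S N + k)%nat * Ck z (S N + k)%nat)
     <= Series (fun k => q (S N + k)%nat)).
  { apply Series_le. intro n. unfold q.
    pose proof (Ck_bnd z (S N + n) Hz); pose proof (pd_nn (S N + n)). nra.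
    apply (ex_series_incr_n q (S N)) in Exq. exact Exq. }
  assert (T3 : Series q = sum_f_R0 q N + Series (fun k => q (S N + k)%nat)).
  { rewrite (Series_incr_n q (S N)) by (auto; lia). reflexivity. }
  rewrite (is_series_unique _ _ Hq) in T3.
  assert (Q * (1 - z) <= eps / 2).
  { assert (Q * (1-z) <= Q * (eps / (2 * (Q + 1)))) by (apply Rmult_le_compat_l; lra).
    assert (Q * (eps / (2 * (Q + 1))) <= eps / 2).
    { unfold Rdiv. rewrite Rinv_mult. 
      assert (/ (Q+1) * Q <= 1). { apply (Rmult_le_reg_l (Q+1)); [lra|].
        rewrite <- Rmult_assoc, Rinv_r by lra. lra. }
      pose proof (Rinv_0_lt_compat (Q+1) ltac:(lra)). nra. }
    lra. }
  apply Rabs_def2 in HN. lra.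
Qed.

End PD.

Lemma small_lemma a b c : 0 <= c -> (forall x, 0 < x <= 1 -> a <= b + x * c) -> a <= b.
Proof.
  intros Hc H. destruct (Rle_dec a b) as [|Hn]; auto.
  exfalso. set (x := Rmin 1 ((a - b) / (2 * (c + 1)))).
  assert (Hx0 : 0 < x). { unfold x. apply Rmin_glb_lt. lra. apply Rdiv_lt_0_compat; lra. }
  assert (Hx1 : x <= 1) by apply Rmin_l.
  assert (Hx2 : x <= (a - b) / (2 * (c + 1))) by apply Rmin_r.
  specialize (H x (conj Hx0 Hx1)).
  assert (x * (2 * (c+1)) <= a - b).
  { apply (Rmult_le_compat_r (2 * (c+1))) in Hx2; [|lra].
    unfold Rdiv in Hx2. rewrite Rmult_assoc, Rinv_l in Hx2 by lra. lra. }
  nra.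
Qed.

Lemma extract (f : nat -> R) (m s Kf : R) : is_pdens f -> 0 <= Kf ->
  (forall eps, 0 < eps -> exists Ke, 0 <= Ke /\ forall z, 0 <= z <= 1 ->
     Rabs (gf f z - (1 - m * (1 - z) + s / 2 * (1 - z) ^ 2)) <= Kf * (1 - z) ^ 2 * (eps + Ke * (1 - z))) ->
  finite_M2 f /\ M1 f = m /\ M2 f = s + m.
Proof.
  intros Hf HK H.
  destruct (H 1 ltac:(lra)) as [K1 [HK1 H1]].
  set (c1 := Rabs s / 2 + Kf * (1 + K1)).
  assert (Hc1 : 0 <= c1). { unfold c1. pose proof (Rabs_pos s). nra. }
  assert (HD : forall x, 0 < x <= 1 ->
     ex_series (fun k => f k * Dk (1 - x) k) /\
     m - x * c1 <= Series (fun k => f k * Dk (1 - x) k) <= m + x * c1).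
  { intros x Hx. destruct (pd_gfD f Hf (1 - x) ltac:(lra)) as [Ex Eq].
    split; auto. specialize (H1 (1 - x) ltac:(lra)).
    replace (1 - (1 - x)) with x in * by ring.
    set (Dz := Series (fun k => f k * Dk (1 - x) k)) in *.
    replace (gf f (1 - x)) with (1 - x * Dz) in H1 by lra.
    replace (1 - x * Dz - (1 - m * x + s / 2 * x ^ 2)) with (x * (m - Dz - s / 2 * x)) in H1 by ring.
    rewrite Rabs_mult, Rabs_pos_eq in H1 by lra.
    assert (Rabs (m - Dz - s/2 * x) <= Kf * x * (1 + K1 * x)).
    { apply (Rmult_le_reg_l x); [lra|]. nra. }
    assert (K1 * x <= K1) by nra.
    assert (Kf * x * (1 + K1 * x) <= x * (Kf * (1 + K1))).
    { replace (x * (Kf * (1 + K1))) with (Kf * x * (1 + K1)) by ring.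
      apply Rmult_le_compat_l; nra. }
    pose proof (Rabs_pos s). 
    assert (Rabs (s/2 * x) <= x * (Rabs s / 2)).
    { rewrite Rabs_mult, (Rabs_pos_eq x) by lra. unfold Rdiv. rewrite Rabs_mult, (Rabs_pos_eq (/2)) by lra. lra. }
    pose proof (Rle_abs (m - Dz - s / 2 * x)). pose proof (Rle_abs (-(m - Dz - s / 2 * x))).
    pose proof (Rle_abs (s/2*x)). pose proof (Rle_abs (-(s/2*x))).
    rewrite !Rabs_Ropp in *. unfold c1. split; lra. }
  assert (HM1a : forall N, sum_f_R0 (fun v => INR v * f v) N <= m).
  { intro N. set (QN := sum_f_R0 (fun v => f v * INR v ^ 2) N).
    assert (HQ : 0 <= QN). { apply cond_pos_sum. intro n. pose proof (pd_nn f Hf n). pose proof (pos_INR n). nra. }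
    apply (small_lemma _ _ (c1 + QN)); [lra|]. intros x Hx.
    destruct (HD x Hx) as [Ex [_ Hup]].
    pose proof (sum_le_Series (fun k => f k * Dk (1 - x) k) N) as HS.
    assert (sum_f_R0 (fun v => INR v * f v) N <= sum_f_R0 (fun k => f k * Dk (1 - x) k) N + x * QN).
    { unfold QN. rewrite scal_sum, <- sum_plus. apply sum_Rle. intros n _.
      pose proof (Ck_id (1 - x) n). pose proof (Ck_bnd (1 - x) n ltac:(lra)).
      pose proof (pd_nn f Hf n). pose proof (pos_INR n).
      replace (1 - (1 - x)) with x in * by ring.
      assert (x * Ck (1 - x) n <= x * INR n ^ 2) by (apply Rmult_le_compat_l; nra).
      assert (f n * (x * Ck (1 - x) n) <= f n * (x * INR n ^ 2)) by (apply Rmult_le_compat_l; nra).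
      nra. }
    assert (sum_f_R0 (fun k => f k * Dk (1 - x) k) N <= Series (fun k => f k * Dk (1 - x) k)).
    { apply HS; auto. intro n. pose proof (Dk_bnd (1-x) n ltac:(lra)). pose proof (pd_nn f Hf n). nra. }
    nra. }
  destruct (ex_series_bounded (fun v => INR v * f v) m) as [EM1 HM1le]; auto.
  { intro n. pose proof (pd_nn f Hf n). pose proof (pos_INR n). nra. }
  assert (HM1 : M1 f = m).
  { apply Rle_antisym; auto.
    apply (small_lemma _ _ c1); auto. intros x Hx.
    destruct (HD x Hx) as [Ex [Hlo _]].
    assert (Series (fun k => f k * Dk (1 - x) k) <= M1 f).
    { apply Series_le; auto. intro n. pose proof (Dk_bnd (1-x) n ltac:(lra)). pose proof (pd_nn f Hf n). nra. }
    lra. }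
  assert (HC : forall x, 0 < x <= 1 -> ex_series (fun k => f k * Ck (1 - x) k) /\
      gf f (1 - x) = 1 - x * m + x ^ 2 * Series (fun k => f k * Ck (1 - x) k)).
  { intros x Hx. destruct (pd_gfD f Hf (1 - x) ltac:(lra)) as [Ex Eq].
    assert (EC : ex_series (fun k => f k * Ck (1 - x) k)).
    { apply (ex_series_le_R _ (fun k => INR k * f k * / x)); [|apply ex_series_scal_r; auto].
      intro n. pose proof (Ck_id (1 - x) n). pose proof (Ck_bnd (1 - x) n ltac:(lra)).
      pose proof (Dk_bnd (1 - x) n ltac:(lra)). pose proof (pd_nn f Hf n).
      replace (1 - (1 - x)) with x in * by ring. split. nra.
      assert (Ck (1-x) n <= INR n * / x).
      { apply (Rmult_le_reg_l x); [lra|]. rewrite <- Rmult_assoc, (Rmult_comm x (INR n)), Rmult_assoc, Rinv_r by lra. lra. }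
      nra. }
    split; auto.
    assert (Series (fun k => f k * Dk (1 - x) k) = M1 f - x * Series (fun k => f k * Ck (1 - x) k)).
    { rewrite <- Series_scal_l. unfold M1. rewrite <- Series_minus; auto.
      apply Series_ext; intro n. pose proof (Ck_id (1 - x) n).
      replace (1 - (1 - x)) with x in * by ring.
      replace (f n * Dk (1 - x) n) with (INR n * f n - f n * (INR n - Dk (1 - x) n)) by ring.
      rewrite H0. ring. apply ex_series_mult_l; auto. }
    replace (1 - (1 - x)) with x in Eq by ring.
    rewrite H0, HM1 in Eq. nra. }
  set (q := fun k => f k * (INR k * (INR k - 1) / 2)).
  assert (Hq0 : forall n, 0 <= q n).
  { intro n. unfold q. pose proof (pd_nn f Hf n). pose proof (pos_INR n).
    destruct n. simpl; lra. rewrite S_INR in *. pose proof (pos_INR n). nra. }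
  assert (HCb : forall eps, 0 < eps -> exists Ke, 0 <= Ke /\ forall x, 0 < x <= 1 ->
     Rabs (Series (fun k => f k * Ck (1 - x) k) - s / 2) <= Kf * (eps + Ke * x)).
  { intros eps He. destruct (H eps He) as [Ke [HKe Hb]]. exists Ke; split; auto.
    intros x Hx. specialize (Hb (1 - x) ltac:(lra)). destruct (HC x Hx) as [_ Eq].
    rewrite Eq in Hb. replace (1 - (1 - x)) with x in Hb by ring.
    replace (1 - x * m + x ^ 2 * Series (fun k => f k * Ck (1 - x) k) - (1 - m * x + s / 2 * x ^ 2))
      with (x ^ 2 * (Series (fun k => f k * Ck (1 - x) k) - s / 2)) in Hb by ring.
    rewrite Rabs_mult, (Rabs_pos_eq (x^2)) in Hb by nra.
    apply (Rmult_le_reg_l (x ^ 2)); [nra|]. nra. }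
  assert (Hqs : forall N, sum_f_R0 q N <= s / 2).
  { intro N. apply (small_lemma _ _ Kf); auto. intros e He.
    destruct (HCb e ltac:(lra)) as [Ke [HKe HB]].
    set (QN := sum_f_R0 (fun v => f v * INR v ^ 3) N).
    assert (HQ : 0 <= QN). { apply cond_pos_sum. intro n. pose proof (pd_nn f Hf n). pose proof (pos_INR n). apply Rmult_le_pos; auto; apply pow_le; auto. }
    apply (small_lemma _ _ (Kf * Ke + QN)). nra. intros x Hx.
    destruct (HC x Hx) as [EC _]. specialize (HB x Hx).
    assert (sum_f_R0 q N <= sum_f_R0 (fun k => f k * Ck (1 - x) k) N + x * QN).
    { unfold QN. rewrite scal_sum, <- sum_plus. apply sum_Rle. intros n _. unfold q.
      pose proof (Ck_low (1 - x) n ltac:(lra)). pose proof (pd_nn f Hf n).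
      replace (1 - (1 - x)) with x in * by ring. nra. }
    assert (sum_f_R0 (fun k => f k * Ck (1 - x) k) N <= Series (fun k => f k * Ck (1 - x) k)).
    { apply sum_le_Series; auto. intro n. pose proof (Ck_bnd (1-x) n ltac:(lra)). pose proof (pd_nn f Hf n). nra. }
    apply Rabs_def2b in HB || idtac. pose proof (Rle_abs (Series (fun k => f k * Ck (1 - x) k) - s / 2)).
    nra. }
  destruct (ex_series_bounded q (s / 2) Hq0 Hqs) as [Eq Hqle].
  assert (Hqge : s / 2 <= Series q).
  { apply (small_lemma _ _ Kf); auto. intros e He.
    destruct (HCb e ltac:(lra)) as [Ke [HKe HB]].
    apply (small_lemma _ _ (Kf * Ke)). nra. intros x Hx.
    destruct (HC x Hx) as [EC _]. specialize (HB x Hx).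
    assert (Series (fun k => f k * Ck (1 - x) k) <= Series q).
    { apply Series_le; auto. intro n. unfold q. pose proof (Ck_bnd (1-x) n ltac:(lra)). pose proof (pd_nn f Hf n). nra. }
    pose proof (Rle_abs (-(Series (fun k => f k * Ck (1 - x) k) - s / 2))) as HH. rewrite Rabs_Ropp in HH.
    nra. }
  assert (E2 : ex_series (fun v => INR v ^ 2 * f v)).
  { apply (ex_series_ext (fun v => 2 * q v + INR v * f v)).
    - intro n. unfold q. change (2 * q n + INR n * f n = INR n ^ 2 * f n :> R). unfold q. field.
    - apply (ex_series_plus (fun v => 2 * q v)). apply ex_series_mult_l; auto. auto. }
  split; [exact E2|]. split; auto.
  unfold M2. rewrite (Series_ext _ (fun v => 2 * q v + INR v * f v)).
  rewrite Series_plus, Series_scal_l. fold (M1 f). lra.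
  apply ex_series_mult_l; auto. auto.
  intro n. unfold q. field.
Qed.

Lemma ball_R (x e y : R) : ball x e y <-> Rabs (y - x) < e.
Proof. reflexivity. Qed.

Lemma cont_at_right (phi : R -> R) t0 :
  filterlim phi (locally t0) (locally (phi t0)) -> filterlim phi (at_right t0) (locally (phi t0)).
Proof.
  intros Hc P HP. specialize (Hc P HP). unfold filtermap in *.
  unfold at_right, within. apply (filter_imp (fun x => P (phi x))); auto.
Qed.

Lemma mvt_bound (phi dphi : R -> R) t0 r B : t0 < r ->
  (forall rho, t0 < rho <= r -> is_derive phi rho (dphi rho)) ->
  (forall rho, t0 < rho <= r -> Rabs (dphi rho) <= B) ->
  filterlim phi (at_right t0) (locally (phi t0)) ->
  Rabs (phi r - phi t0) <= B * (r - t0).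
Proof.
  intros Hr Hd HB Hc.
  assert (HB0 : 0 <= B). { pose proof (HB r ltac:(lra)). pose proof (Rabs_pos (dphi r)). lra. }
  assert (Hs : forall s, t0 < s < r -> Rabs (phi r - phi s) <= B * (r - t0)).
  { intros s Hs.
    destruct (MVT_gen phi s r dphi) as [c [Hc1 Hc2]].
    - intros x Hx. rewrite Rmin_left, Rmax_right in Hx by lra. apply Hd. lra.
    - intros x Hx. rewrite Rmin_left, Rmax_right in Hx by lra.
      apply continuity_pt_filterlim. apply (ex_derive_continuous phi x).
      exists (dphi x). apply Hd. lra.
    - rewrite Rmin_left, Rmax_right in Hc1 by lra.
      rewrite Hc2, Rabs_mult, (Rabs_pos_eq (r - s)) by lra.
      pose proof (HB c ltac:(lra)). pose proof (Rabs_pos (dphi c)).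
      apply Rle_trans with (B * (r - s)). apply Rmult_le_compat_r; lra. nra. }
  destruct (Rle_dec (Rabs (phi r - phi t0)) (B * (r - t0))) as [|Hn]; auto.
  exfalso. set (e := Rabs (phi r - phi t0) - B * (r - t0)).
  assert (He : 0 < e) by (unfold e; lra).
  destruct (Hc _ (locally_ball (phi t0) (mkposreal e He))) as [d Hdd].
  set (s := t0 + Rmin (d / 2) ((r - t0) / 2)).
  assert (Hs1 : t0 < s < r).
  { unfold s. pose proof (cond_pos d). split.
    assert (0 < Rmin (d/2) ((r - t0)/2)) by (apply Rmin_glb_lt; lra). lra.
    pose proof (Rmin_r (d/2) ((r-t0)/2)). lra. }
  assert (Hb : Rabs (phi s - phi t0) < e).
  { assert (Hb1 : ball t0 d s).
    { apply ball_R. unfold s. pose proof (cond_pos d).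
      pose proof (Rmin_l (d/2) ((r-t0)/2)).
      assert (0 < Rmin (d/2) ((r - t0)/2)) by (apply Rmin_glb_lt; lra).
      rewrite Rabs_pos_eq; lra. }
    exact (Hdd s Hb1 (proj1 Hs1)). }
  pose proof (Hs s Hs1).
  pose proof (Rabs_triang (phi r - phi s) (phi s - phi t0)).
  replace (phi r - phi s + (phi s - phi t0)) with (phi r - phi t0) in H0 by ring.
  unfold e in *. lra.
Qed.

Lemma pow2_ge n : INR n + 1 <= 2 ^ n.
Proof.
  induction n. simpl; lra. rewrite S_INR. simpl. pose proof (pos_INR n). lra.
Qed.

Lemma pow2_arch x y : 0 <= y -> (forall n, x <= y / 2 ^ n) -> x <= 0.
Proof.
  intros Hy H. destruct (Rle_dec x 0) as [|Hn]; auto. exfalso.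
  destruct (INR_archimed x y ltac:(lra)) as [n Hn2].
  specialize (H n). pose proof (pow2_ge n). pose proof (pos_INR n).
  assert (y / 2 ^ n * 2 ^ n = y) by (field; lra).
  nra.
Qed.

Section Gron.
Variables (H dH : R -> R -> R) (W : R -> R) (T L Hb delta : R).
Hypothesis HL : 0 <= L.
Hypothesis Hdelta : 0 < delta.
Hypothesis HW : forall w, 0 <= w <= 1 -> delta <= W w.
Hypothesis HHb : forall r w, 0 <= r <= T -> 0 <= w <= 1 -> Rabs (H r w) <= Hb.
Hypothesis Hder : forall w, 0 <= w <= 1 -> forall r, 0 < r <= T -> is_derive (fun r => H r w) r (dH r w).
Hypothesis Hrc : forall w, 0 <= w <= 1 -> filterlim (fun r => H r w) (at_right 0) (locally (H 0 w)).
Hypothesis HdB : forall r Kb, 0 < r <= T -> 0 <= Kb ->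
  (forall w, 0 <= w <= 1 -> Rabs (H r w) <= Kb * W w) ->
  forall z, 0 <= z <= 1 -> Rabs (dH r z) <= W z * (1 + L * Kb).

Lemma gron_step t0 t1 K0 : 0 <= t0 <= t1 -> t1 <= T -> L * (t1 - t0) <= 1/2 -> 0 <= K0 ->
  (forall w, 0 <= w <= 1 -> Rabs (H t0 w) <= K0 * W w) ->
  forall r w, t0 <= r <= t1 -> 0 <= w <= 1 -> Rabs (H r w) <= 2 * (K0 + (t1 - t0)) * W w.
Proof.
  intros Ht Ht1 HLh HK0 H0.
  set (h := t1 - t0). set (c := 2 * (K0 + h)). set (D := Hb / delta).
  assert (HHb0 : 0 <= Hb). { pose proof (HHb t0 0 ltac:(lra) ltac:(lra)). pose proof (Rabs_pos (H t0 0)). lra. }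
  assert (HD : 0 <= D) by (unfold D; apply Rdiv_le_0_compat; lra).
  assert (Hc : 0 <= c) by (unfold c, h; lra).
  assert (Hn : forall n, forall r w, t0 <= r <= t1 -> 0 <= w <= 1 -> Rabs (H r w) <= (c + D / 2 ^ n) * W w).
  { induction n; intros r w Hr Hw.
    - simpl. rewrite Rdiv_1_r. pose proof (HHb r w ltac:(lra) Hw). pose proof (HW w Hw).
      assert (Hb <= D * W w).
      { unfold D. apply Rle_trans with (Hb / delta * delta). right; field; lra.
        apply Rmult_le_compat_l; [fold D; lra|lra]. }
      nra.
    - pose proof (HW w Hw) as HWw.
      assert (HP : 0 < 2 ^ n) by (apply pow_lt; lra).
      assert (HDn : 0 <= D / 2 ^ n) by (apply Rdiv_le_0_compat; lra).
      destruct (Req_dec r t0) as [->|Hrt].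
      + pose proof (H0 w Hw).
        assert (0 <= D / 2 ^ S n) by (apply Rdiv_le_0_compat; [lra|apply pow_lt; lra]).
        unfold c, h. nra.
      + set (Kb := c + D / 2 ^ n).
        assert (HKb : 0 <= Kb) by (unfold Kb; lra).
        assert (Hm := mvt_bound (fun r => H r w) (fun r => dH r w) t0 r (W w * (1 + L * Kb)) ltac:(lra)).
        assert (Hdiff : Rabs (H r w - H t0 w) <= W w * (1 + L * Kb) * (r - t0)).
        { apply Hm.
          - intros rho Hrho. apply Hder; auto. lra.
          - intros rho Hrho. apply HdB; auto. lra.
            intros w' Hw'. apply IHn; auto. lra.
          - destruct (Req_dec t0 0) as [->|Ht0]. apply Hrc; auto.
            apply (cont_at_right (fun r => H r w) t0). apply (ex_derive_continuous (fun r => H r w)).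
            exists (dH t0 w). apply Hder; auto. lra. }
        pose proof (H0 w Hw).
        assert (E1 : W w * (1 + L * Kb) * (r - t0) <= W w * (h + Kb / 2)).
        { apply Rle_trans with (W w * ((1 + L * Kb) * h)).
          rewrite Rmult_assoc. apply Rmult_le_compat_l. lra. apply Rmult_le_compat_l. nra. unfold h; lra.
          apply Rmult_le_compat_l. lra. unfold h in *. nra. }
        pose proof (Rabs_triang (H r w - H t0 w) (H t0 w)).
        replace (H r w - H t0 w + H t0 w) with (H r w) in H2 by ring.
        assert (D / 2 ^ S n = D / 2 ^ n / 2) by (simpl; field; lra).
        unfold Kb, c in *. nra. }
  intros r w Hr Hw.
  assert (X : Rabs (H r w) - c * W w <= 0).
  { apply (pow2_arch _ (D * W w)). pose proof (HW w Hw). nra.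
    intro n. specialize (Hn n r w Hr Hw).
    assert (D * W w / 2 ^ n = D / 2 ^ n * W w) by (field; apply pow_nonzero; lra). lra. }
  unfold c, h in *. lra.
Qed.

End Gron.

Fixpoint Kseq (h : R) (j : nat) : R := match j with O => 1 | S j => 2 * (Kseq h j + h) end.

Lemma Kseq_pos h j : 0 <= h -> 1 <= Kseq h j.
Proof. intros Hh; induction j; simpl; lra. Qed.

Lemma gronwall T L : 0 < T -> 0 <= L -> exists Kfin, 0 <= Kfin /\
  forall (H dH : R -> R -> R) (W : R -> R) (Hb delta : R),
  0 < delta ->
  (forall w, 0 <= w <= 1 -> delta <= W w) ->
  (forall r w, 0 <= r <= T -> 0 <= w <= 1 -> Rabs (H r w) <= Hb) ->
  (forall w, 0 <= w <= 1 -> forall r, 0 < r <= T -> is_derive (fun r => H r w) r (dH r w)) ->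
  (forall w, 0 <= w <= 1 -> filterlim (fun r => H r w) (at_right 0) (locally (H 0 w))) ->
  (forall r Kb, 0 < r <= T -> 0 <= Kb ->
     (forall w, 0 <= w <= 1 -> Rabs (H r w) <= Kb * W w) ->
     forall z, 0 <= z <= 1 -> Rabs (dH r z) <= W z * (1 + L * Kb)) ->
  (forall w, 0 <= w <= 1 -> Rabs (H 0 w) <= W w) ->
  forall r w, 0 <= r <= T -> 0 <= w <= 1 -> Rabs (H r w) <= Kfin * W w.
Proof.
  intros HT HL.
  destruct (INR_unbounded (2 * L * T)) as [N HN].
  set (M := S N). set (h := T / INR M).
  assert (HM : 0 < INR M) by (unfold M; rewrite S_INR; pose proof (pos_INR N); lra).
  assert (Hh : 0 < h) by (unfold h; apply Rdiv_lt_0_compat; lra).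
  assert (HMh : INR M * h = T) by (unfold h; field; lra).
  assert (HLh : L * h <= 1/2).
  { unfold h. assert (2 * L * T <= INR M) by (unfold M; rewrite S_INR; lra).
    apply (Rmult_le_reg_l (2 * INR M)); [lra|].
    replace (2 * INR M * (L * (T / INR M))) with (2 * L * T) by (field; lra). lra. }
  exists (Kseq h M). split. pose proof (Kseq_pos h M ltac:(lra)); lra.
  intros H dH W Hb delta Hd HW HHb Hder Hrc HdB H0.
  assert (Cl : forall j, (j <= M)%nat -> forall r w, 0 <= r <= INR j * h -> 0 <= w <= 1 ->
     Rabs (H r w) <= Kseq h j * W w).
  { induction j; intros Hj r w Hr Hw.
    - simpl in Hr. replace r with 0 by lra. simpl. rewrite Rmult_1_l. auto.
    - assert (HjM : INR (S j) * h <= T).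
      { rewrite <- HMh. apply Rmult_le_compat_r. lra. apply le_INR. exact Hj. }
      rewrite S_INR in Hr, HjM.
      pose proof (pos_INR j).
      destruct (Rle_dec r (INR j * h)) as [Hle|Hgt].
      + apply Rle_trans with (Kseq h j * W w). apply IHj; auto. lia. lra.
        simpl. apply Rmult_le_compat_r. pose proof (HW w Hw); lra.
        pose proof (Kseq_pos h j ltac:(lra)). lra.
      + simpl Kseq.
        replace h with (((INR j + 1) * h) - INR j * h) at 2 by ring.
        apply (gron_step H dH W T L Hb delta HL Hd HW HHb Hder Hrc HdB (INR j * h) ((INR j + 1) * h) (Kseq h j)).
        * split. nra. nra.
        * lra.
        * replace ((INR j + 1) * h - INR j * h) with h by ring. lra.
        * pose proof (Kseq_pos h j ltac:(lra)); lra.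
        * intros w' Hw'. apply IHj; auto. lia. split. nra. lra.
        * lra.
        * exact Hw. }
  intros r w Hr Hw. apply Cl; auto. lra.
Qed.

Lemma der_plus (f g : R -> R) t df dg : is_derive f t df -> is_derive g t dg ->
  is_derive (fun x => f x + g x) t (df + dg).
Proof. intros Hf Hg. exact (is_derive_plus f g t df dg Hf Hg). Qed.

Lemma der_exp a t : is_derive (fun x => exp (a * x)) t (a * exp (a * t)).
Proof. auto_derive; auto. ring. Qed.

Lemma phi_der a b t : is_derive (phi a b) t (b * phi a b t + exp (a * t)).
Proof.
  unfold phi. destruct (Req_EM_T a b) as [->|Hab].
  - auto_derive; auto. ring.
  - auto_derive; auto. field. lra.
Qed.

Lemma phi0 a b : phi a b 0 = 0.
Proof. unfold phi. destruct (Req_EM_T a b); rewrite !Rmult_0_r, exp_0; field_simplify; auto; lra. Qed.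

Lemma lim_minus {F : (R -> Prop) -> Prop} {FF : Filter F} (g p : R -> R) lg lp :
  filterlim g F (locally lg) -> filterlim p F (locally lp) ->
  filterlim (fun r => g r - p r) F (locally (lg - lp)).
Proof.
  intros Hg Hp P [e He].
  assert (He2 : 0 < e / 2) by (pose proof (cond_pos e); lra).
  specialize (Hg _ (locally_ball lg (mkposreal _ He2))).
  specialize (Hp _ (locally_ball lp (mkposreal _ He2))).
  unfold filtermap in *.
  apply (filter_imp (fun r => ball lg (e/2) (g r) /\ ball lp (e/2) (p r))).
  - intros r [H1 H2]. apply He. apply ball_R. apply ball_R in H1. apply ball_R in H2.
    replace (g r - p r - (lg - lp)) with ((g r - lg) - (p r - lp)) by ring.
    pose proof (Rabs_triang (g r - lg) (- (p r - lp))). rewrite Rabs_Ropp in H.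
    replace (g r - lg + - (p r - lp)) with (g r - lg - (p r - lp)) in H by ring. assert (A1 : Rabs (g r - lg) < e/2) by exact H1. assert (A2 : Rabs (p r - lp) < e/2) by exact H2. lra.
  - apply filter_and; auto.
Qed.

Lemma der_cont (f : R -> R) t df : is_derive f t df -> continuity_pt f t.
Proof.
  intros H. apply continuity_pt_filterlim. apply (ex_derive_continuous f t). exists df; exact H.
Qed.

Definition Qf (m s mu nu sX sY rX rY x : R) :=
  let uX := mu - x * rX in let uY := nu - x * rY in
  m * (rX + rY - (sX + sY) / 2) + s / 2 * (uX ^ 2 - mu ^ 2 + uY ^ 2 - nu ^ 2)
  + m ^ 2 * (uX * uY - mu * nu) - m * s / 2 * x * uX * uY * (uX + uY)
  + s ^ 2 / 4 * x ^ 2 * uX ^ 2 * uY ^ 2.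

Lemma E_identity m s mu nu sX sY rX rY x :
  let uX := mu - x * rX in let uY := nu - x * rY in
  let Pf w := 1 - m * (1 - w) + s / 2 * (1 - w) ^ 2 in
  let dm := (mu + nu - 1) * m in
  let ds := (mu ^ 2 + nu ^ 2 - 1) * s + m * (sX + sY) + 2 * (mu * nu) * m ^ 2 in
  Pf (1 - x * uX) * Pf (1 - x * uY) - Pf (1 - x) - (- dm * x + ds / 2 * x ^ 2)
  = x ^ 2 * Qf m s mu nu sX sY rX rY x.
Proof. intros. unfold Qf, Pf, uX, uY, dm, ds. field. Qed.

Lemma abs_mul_le a b A B : Rabs a <= A -> Rabs b <= B -> Rabs (a * b) <= A * B.
Proof.
  intros Ha Hb. rewrite Rabs_mult. apply Rmult_le_compat; auto using Rabs_pos.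
Qed.

Lemma Qbound m s mu nu sX sY rX rY x K :
  0 <= x <= 1 -> Rabs m <= K -> Rabs s <= K ->
  0 <= rX <= sX / 2 -> 0 <= rY <= sY / 2 ->
  0 <= mu - x * rX -> 0 <= nu - x * rY ->
  Rabs (Qf m s mu nu sX sY rX rY x) <=
  K * (sX / 2 - rX + (sY / 2 - rY)) +
  x * (K / 2 * (sX * mu + sY * nu) + K ^ 2 * (sX * nu + mu * sY) / 2
       + K ^ 2 * mu * nu * (mu + nu) / 2 + K ^ 2 * mu ^ 2 * nu ^ 2 / 4).
Proof.
  intros Hx Hm Hs HrX HrY HuX HuY.
  assert (HK : 0 <= K) by (pose proof (Rabs_pos m); lra).
  assert (Hmu : 0 <= mu) by nra. assert (Hnu : 0 <= nu) by nra.
  unfold Qf. set (uX := mu - x * rX) in *. set (uY := nu - x * rY) in *.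
  assert (HuX' : uX <= mu) by (unfold uX; nra). assert (HuY' : uY <= nu) by (unfold uY; nra).
  assert (T1 : Rabs (m * (rX + rY - (sX + sY) / 2)) <= K * (sX / 2 - rX + (sY / 2 - rY))).
  { apply abs_mul_le; auto. rewrite Rabs_left1 by lra. lra. }
  assert (HxrX : 0 <= x * rX) by nra. assert (HxrY : 0 <= x * rY) by nra.
  assert (Hs2 : s ^ 2 <= K ^ 2).
  { rewrite <- (pow2_abs s). pose proof (Rabs_pos s). apply pow_incr; lra. }
  assert (Hm2 : m ^ 2 <= K ^ 2).
  { rewrite <- (pow2_abs m). pose proof (Rabs_pos m). apply pow_incr; lra. }
  assert (T2 : Rabs (s / 2 * (uX ^ 2 - mu ^ 2 + uY ^ 2 - nu ^ 2)) <= K / 2 * (x * (sX * mu + sY * nu))).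
  { apply abs_mul_le.
    unfold Rdiv. rewrite Rabs_mult, (Rabs_pos_eq (/2)) by lra. lra.
    assert (uX ^ 2 - mu ^ 2 + uY ^ 2 - nu ^ 2 = - (x * rX * (uX + mu) + x * rY * (uY + nu))) by (unfold uX, uY; ring).
    rewrite H, Rabs_Ropp.
    assert (x * rX * (uX + mu) <= x * (sX / 2) * (2 * mu)).
    { apply Rmult_le_compat; nra. }
    assert (x * rY * (uY + nu) <= x * (sY / 2) * (2 * nu)).
    { apply Rmult_le_compat; nra. }
    assert (0 <= x * rX * (uX + mu)) by (apply Rmult_le_pos; lra).
    assert (0 <= x * rY * (uY + nu)) by (apply Rmult_le_pos; lra).
    rewrite Rabs_pos_eq by lra. nra. }
  assert (T3 : Rabs (m ^ 2 * (uX * uY - mu * nu)) <= K ^ 2 * (x * (sX * nu + mu * sY) / 2)).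
  { apply abs_mul_le.
    rewrite Rabs_pos_eq by nra. lra.
    assert (uX * uY - mu * nu = - (x * rX * uY + mu * (x * rY))) by (unfold uX, uY; ring).
    rewrite H, Rabs_Ropp.
    assert (x * rX * uY <= x * (sX / 2) * nu) by (apply Rmult_le_compat; nra).
    assert (mu * (x * rY) <= mu * (x * (sY / 2))) by (apply Rmult_le_compat_l; nra).
    assert (0 <= x * rX * uY) by (apply Rmult_le_pos; lra).
    assert (0 <= mu * (x * rY)) by (apply Rmult_le_pos; lra).
    rewrite Rabs_pos_eq by lra. nra. }
  assert (HxuX : 0 <= x * uX <= x * mu) by (split; [apply Rmult_le_pos|apply Rmult_le_compat_l]; lra).
  assert (HxuXY : 0 <= x * uX * uY <= x * mu * nu) by (split; [apply Rmult_le_pos|apply Rmult_le_compat]; lra).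
  assert (T4 : Rabs (m * s / 2 * x * uX * uY * (uX + uY)) <= x * (K ^ 2 * mu * nu * (mu + nu) / 2)).
  { replace (m * s / 2 * x * uX * uY * (uX + uY)) with ((m * s) * (x * uX * uY * (uX + uY) / 2)) by field.
    replace (x * (K ^ 2 * mu * nu * (mu + nu) / 2)) with (K ^ 2 * (x * mu * nu * (mu + nu) / 2)) by field.
    apply abs_mul_le. rewrite Rabs_mult. simpl. rewrite Rmult_1_r. apply Rmult_le_compat; auto using Rabs_pos.
    assert (x * uX * uY * (uX + uY) <= x * mu * nu * (mu + nu)) by (apply Rmult_le_compat; lra).
    assert (0 <= x * uX * uY * (uX + uY)) by (apply Rmult_le_pos; lra).
    rewrite Rabs_pos_eq by lra. lra. }
  assert (T5 : Rabs (s ^ 2 / 4 * x ^ 2 * uX ^ 2 * uY ^ 2) <= x * (K ^ 2 * mu ^ 2 * nu ^ 2 / 4)).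
  { replace (s ^ 2 / 4 * x ^ 2 * uX ^ 2 * uY ^ 2) with (s ^ 2 / 4 * x * ((x * uX * uY) * (uX * uY))) by field.
    assert (HuXY : 0 <= uX * uY <= mu * nu) by (split; [apply Rmult_le_pos|apply Rmult_le_compat]; lra).
    assert (0 <= (x * uX * uY) * (uX * uY) <= mu * nu * (mu * nu)).
    { split. apply Rmult_le_pos; lra. apply Rmult_le_compat; try lra. nra. }
    assert (0 <= s ^ 2) by nra.
    rewrite Rabs_pos_eq.
    replace (x * (K ^ 2 * mu ^ 2 * nu ^ 2 / 4)) with (K ^ 2 / 4 * x * (mu * nu * (mu * nu))) by field.
    apply Rmult_le_compat; try nra. 
    apply Rmult_le_pos; [|lra]. apply Rmult_le_pos; lra. }
  set (t1 := m * (rX + rY - (sX + sY) / 2)) in *.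
  set (t2 := s / 2 * (uX ^ 2 - mu ^ 2 + uY ^ 2 - nu ^ 2)) in *.
  set (t3 := m ^ 2 * (uX * uY - mu * nu)) in *.
  set (t4 := m * s / 2 * x * uX * uY * (uX + uY)) in *.
  set (t5 := s ^ 2 / 4 * x ^ 2 * uX ^ 2 * uY ^ 2) in *.
  pose proof (Rabs_triang (t1 + t2 + t3 - t4) t5).
  pose proof (Rabs_triang (t1 + t2 + t3) (- t4)). rewrite Rabs_Ropp in H0.
  pose proof (Rabs_triang (t1 + t2) t3).
  pose proof (Rabs_triang t1 t2).
  replace (t1 + t2 + t3 + - t4) with (t1 + t2 + t3 - t4) in H0 by ring.
  lra.
Qed.

Lemma der_eq (f : R -> R) (t d d' : R) : is_derive f t d -> d = d' -> is_derive f t d'.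
Proof. intros H ->; exact H. Qed.

Lemma der_lin (f g : R -> R) c d t df dg : is_derive f t df -> is_derive g t dg ->
  is_derive (fun t => 1 - f t * c + (g t - f t) / 2 * d) t (- df * c + (dg - df) / 2 * d).
Proof.
  intros Hf Hg.
  apply (is_derive_ext (fun t => 1 + ((- c - d / 2) * f t + (d / 2) * g t))).
  intro x; change (@eq R (1 + ((- c - d / 2) * f x + d / 2 * g x)) (1 - f x * c + (g x - f x) / 2 * d)); field.
  assert (E : 0 + ((- c - d / 2) * df + (d / 2) * dg) = - df * c + (dg - df) / 2 * d) by field.
  rewrite <- E.
  apply der_plus. exact (is_derive_const (1:R) t).
  apply der_plus; apply is_derive_scal; auto.
Qed.

Lemma small_split e c eta eps x : 0 <= e <= c -> 0 < eta -> 0 <= x -> 0 <= eps ->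
  (x <= eta -> e <= eps) -> e <= eps + x * (c / eta).
Proof.
  intros He Heta Hx Heps H. destruct (Rle_dec x eta) as [Hle|Hgt].
  - specialize (H Hle). assert (0 <= x * (c / eta)) by (apply Rmult_le_pos; [lra|apply Rdiv_le_0_compat; lra]). lra.
  - assert (c <= x * (c / eta)).
    { apply Rle_trans with (eta * (c / eta)). right; field; lra.
      apply Rmult_le_compat_r. apply Rdiv_le_0_compat; lra. lra. }
    lra.
Qed.

Lemma abs_bounds x K : Rabs x <= K -> - K <= x <= K.
Proof. intros H. pose proof (Rle_abs x). pose proof (Rle_abs (- x)). rewrite Rabs_Ropp in H1. lra. Qed.

Lemma W_mono eps Ke d x y c : 0 <= eps -> 0 <= Ke -> 0 <= d -> 0 <= x -> 0 <= y <= c * x -> 0 <= c ->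
  y ^ 2 * (eps + Ke * y) + d <= (1 + c ^ 2 + c ^ 3) * (x ^ 2 * (eps + Ke * x) + d).
Proof.
  intros He HK Hd Hx Hy Hc.
  assert (H2 : y ^ 2 <= c ^ 2 * x ^ 2). { rewrite <- Rpow_mult_distr. apply pow_incr; lra. }
  assert (H3 : y ^ 3 <= c ^ 3 * x ^ 3). { rewrite <- Rpow_mult_distr. apply pow_incr; lra. }
  assert (0 <= x ^ 2) by (apply pow_le; lra). assert (0 <= x ^ 3) by (apply pow_le; lra).
  assert (0 <= c ^ 2) by (apply pow_le; lra). assert (0 <= c ^ 3) by (apply pow_le; lra).
  replace (y ^ 2 * (eps + Ke * y) + d) with (eps * y ^ 2 + Ke * y ^ 3 + d) by ring.
  replace ((1 + c ^ 2 + c ^ 3) * (x ^ 2 * (eps + Ke * x) + d)) with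
    (eps * x ^ 2 + Ke * x ^ 3 + d + c ^ 2 * (eps * x ^ 2) + c ^ 2 * (Ke * x ^ 3) + c ^ 2 * d
     + c ^ 3 * (eps * x ^ 2) + c ^ 3 * (Ke * x ^ 3) + c ^ 3 * d) by ring.
  assert (eps * y ^ 2 <= c ^ 2 * (eps * x ^ 2)) by nra.
  assert (Ke * y ^ 3 <= c ^ 3 * (Ke * x ^ 3)) by nra.
  assert (0 <= c ^ 2 * (Ke * x ^ 3)) by (apply Rmult_le_pos; [|apply Rmult_le_pos]; lra).
  assert (0 <= c ^ 3 * (eps * x ^ 2)) by (apply Rmult_le_pos; [|apply Rmult_le_pos]; lra).
  assert (0 <= c ^ 2 * d) by (apply Rmult_le_pos; lra).
  assert (0 <= c ^ 3 * d) by (apply Rmult_le_pos; lra).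
  assert (0 <= eps * x ^ 2) by (apply Rmult_le_pos; lra).
  assert (0 <= Ke * x ^ 3) by (apply Rmult_le_pos; lra).
  lra.
Qed.

Lemma comb_bound E hA hB hz PA PB Wz Kb KP cW :
  0 <= Wz -> 0 <= Kb -> 0 <= cW ->
  Rabs E <= Wz -> Rabs hA <= Kb * (cW * Wz) -> Rabs hB <= Kb * (cW * Wz) -> Rabs hB <= 1 + KP ->
  Rabs PA <= KP -> Rabs PB <= KP -> Rabs hz <= Kb * Wz ->
  Rabs (E + hA * PB + PA * hB + hA * hB - hz) <= Wz * (1 + (cW * (3 * KP + 1) + 1) * Kb).
Proof.
  intros HW HK Hc HE HA HB HB' HPA HPB Hz.
  pose proof (abs_mul_le _ _ _ _ HA HPB).
  pose proof (abs_mul_le _ _ _ _ HPA HB).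
  pose proof (abs_mul_le _ _ _ _ HA HB').
  pose proof (Rabs_triang (E + hA * PB + PA * hB + hA * hB) (- hz)). rewrite Rabs_Ropp in H2.
  pose proof (Rabs_triang (E + hA * PB + PA * hB) (hA * hB)).
  pose proof (Rabs_triang (E + hA * PB) (PA * hB)).
  pose proof (Rabs_triang E (hA * PB)).
  replace (E + hA * PB + PA * hB + hA * hB + - hz) with (E + hA * PB + PA * hB + hA * hB - hz) in H2 by ring.
  assert (Kb * (cW * Wz) * KP + KP * (Kb * (cW * Wz)) + Kb * (cW * Wz) * (1 + KP) + Kb * Wz + Wz
     = Wz * (1 + (cW * (3 * KP + 1) + 1) * Kb)) by ring.
  lra.
Qed.

Section Main.
Variables (pX pY f0 : nat -> R) (f : R -> nat -> R).
Hypotheses (HpX : is_pdens pX) (HpY : is_pdens pY) (HmX : finite_M2 pX) (HmY : finite_M2 pY)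
  (Hf0 : is_pdens f0) (Hm0 : finite_M2 f0) (Hk : kinetic_solution pX pY f0 f).

Let mu := M1 pX.
Let nu := M1 pY.
Let sX := M2 pX - M1 pX.
Let sY := M2 pY - M1 pY.
Let a1 := mu + nu - 1.
Let a2 := mu ^ 2 + nu ^ 2 - 1.
Let bet := Varf pX + Varf pY.
Let gam := mu * nu.
Let m0 := M1 f0.
Let S0 := M2 f0.
Let mm t := m0 * exp (a1 * t).
Let MM t := S0 * exp (a2 * t) + bet * m0 * phi a1 a2 t + 2 * gam * m0 ^ 2 * phi (2 * a1) a2 t.
Let ss t := MM t - mm t.
Let PP t w := 1 - mm t * (1 - w) + ss t / 2 * (1 - w) ^ 2.
Let dPP t w := - ((mu + nu - 1) * mm t) * (1 - w) +
   ((mu ^ 2 + nu ^ 2 - 1) * ss t + mm t * (sX + sY) + 2 * (mu * nu) * mm t ^ 2) / 2 * (1 - w) ^ 2.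

Lemma mm_der t : is_derive mm t (a1 * mm t).
Proof. unfold mm. auto_derive; auto. ring. Qed.

Lemma MM_der t : is_derive MM t (a2 * MM t + bet * mm t + 2 * gam * mm t ^ 2).
Proof.
  unfold MM.
  eapply der_eq.
  apply der_plus. apply der_plus.
  apply is_derive_scal, der_exp.
  apply is_derive_scal, phi_der.
  apply is_derive_scal, phi_der.
  unfold mm. replace (exp (2 * a1 * t)) with (exp (a1 * t) ^ 2).
  ring. simpl. rewrite Rmult_1_r, <- exp_plus. f_equal; ring.
Qed.

Lemma PP_der t w : is_derive (fun t => PP t w) t (dPP t w).
Proof.
  unfold PP, ss. eapply der_eq. apply (der_lin mm MM (1 - w) ((1 - w) ^ 2)).
  apply mm_der. apply MM_der.
  unfold dPP, ss, a1, a2, bet, gam, sX, sY, Varf. unfold mu, nu. field.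
Qed.

Lemma PP_cont w t : continuity_pt (fun t => PP t w) t.
Proof. exact (der_cont _ _ _ (PP_der t w)). Qed.

Lemma mm_cont t : continuity_pt mm t.
Proof. exact (der_cont _ _ _ (mm_der t)). Qed.
Lemma ss_cont t : continuity_pt ss t.
Proof.
  assert (is_derive ss t (a2 * MM t + bet * mm t + 2 * gam * mm t ^ 2 - a1 * mm t)).
  { unfold ss. apply (is_derive_minus MM mm t). apply MM_der. apply mm_der. }
  exact (der_cont _ _ _ H).
Qed.

Lemma mm0 : mm 0 = m0.
Proof. unfold mm. rewrite Rmult_0_r, exp_0; ring. Qed.
Lemma ss0 : ss 0 = S0 - m0.
Proof. unfold ss, MM. rewrite mm0, !phi0, Rmult_0_r, exp_0; ring. Qed.

Definition C1 (K mu nu sX sY : R) := K / 2 * (sX * mu + sY * nu) + K ^ 2 * (sX * nu + mu * sY) / 2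
       + K ^ 2 * mu * nu * (mu + nu) / 2 + K ^ 2 * mu ^ 2 * nu ^ 2 / 4.

Lemma C1_nn K u v a b : 0 <= K -> 0 <= u -> 0 <= v -> 0 <= a -> 0 <= b -> 0 <= C1 K u v a b.
Proof. intros. unfold C1, Rdiv. repeat (apply Rplus_le_le_0_compat || apply Rmult_le_pos || apply pow_le); lra. Qed.

Lemma gf_repr p z : is_pdens p -> finite_M2 p -> 0 <= z <= 1 ->
  gf p z = 1 - (1 - z) * (M1 p - (1 - z) * Series (fun k => p k * Ck z k)) /\ 0 <= M1 p - (1 - z) * Series (fun k => p k * Ck z k) /\ 0 <= Series (fun k => p k * Ck z k) <= (M2 p - M1 p) / 2.
Proof.
  intros Hp Hm Hz. rewrite <- (pd_D_eq p Hp Hm z Hz). split. apply pd_gf_eq; auto.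
  split. apply Series_nonneg. intro n. pose proof (Dk_bnd z n Hz). pose proof (pd_nn p Hp n). nra.
  apply pd_D_ex; auto.
  apply (pd_C_bnd p Hp Hm z Hz).
Qed.

Lemma E_bound r z K : Rabs (mm r) <= K -> Rabs (ss r) <= K -> 0 <= z <= 1 ->
  Rabs (PP r (gf pX z) * PP r (gf pY z) - PP r z - dPP r z) <=
  (1 - z) ^ 2 * (K * (sX / 2 - Series (fun k => pX k * Ck z k) + (sY / 2 - Series (fun k => pY k * Ck z k)))
     + (1 - z) * C1 K mu nu sX sY).
Proof.
  intros Hm Hs Hz.
  destruct (gf_repr pX z HpX HmX Hz) as [GX [UX RX]].
  destruct (gf_repr pY z HpY HmY Hz) as [GY [UY RY]].
  fold mu in GX, UX. fold nu in GY, UY. fold sX in RX. fold sY in RY.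
  set (rX := Series (fun k => pX k * Ck z k)) in *.
  set (rY := Series (fun k => pY k * Ck z k)) in *.
  assert (E : PP r (gf pX z) * PP r (gf pY z) - PP r z - dPP r z =
     (1 - z) ^ 2 * Qf (mm r) (ss r) mu nu sX sY rX rY (1 - z)).
  { rewrite GX, GY. unfold PP, dPP, Qf. field. }
  rewrite E, Rabs_mult, (Rabs_pos_eq ((1-z)^2)) by (apply pow_le; lra).
  apply Rmult_le_compat_l. apply pow_le; lra.
  unfold C1. apply Qbound; auto; lra.
Qed.

Lemma mu_nn : 0 <= mu.
Proof. unfold mu, M1. apply Series_nonneg. intro n. pose proof (pd_nn pX HpX n). pose proof (pos_INR n). nra. apply pd_M1_ex; auto. Qed.
Lemma nu_nn : 0 <= nu.
Proof. unfold nu, M1. apply Series_nonneg. intro n. pose proof (pd_nn pY HpY n). pose proof (pos_INR n). nra. apply pd_M1_ex; auto. Qed.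
Lemma F2_nn p : is_pdens p -> finite_M2 p -> 0 <= (M2 p - M1 p) / 2.
Proof.
  intros Hp Hm. pose proof (pd_C_bnd p Hp Hm 1 ltac:(lra)). unfold F2 in H. lra.
Qed.

Lemma main_T T : 0 < T -> finite_M2 (f T) /\ M1 (f T) = mm T /\ M2 (f T) = ss T + mm T.
Proof.
  intros HT. destruct Hk as [Hf00 [Hpd Hgf]].
  pose proof mu_nn as Hmu. pose proof nu_nn as Hnu.
  pose proof (F2_nn pX HpX HmX) as HsX. pose proof (F2_nn pY HpY HmY) as HsY.
  fold sX in HsX. fold sY in HsY.
  destruct (continuity_ab_maj (fun r => Rabs (mm r) + Rabs (ss r)) 0 T) as [Mx [HMx _]]. lra.
  { intros c _. apply (continuity_pt_ext (fun r => (comp Rabs mm r) + (comp Rabs ss r))).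
    intro; reflexivity.
    apply (continuity_pt_plus (comp Rabs mm) (comp Rabs ss)).
    apply continuity_pt_comp. apply mm_cont. apply Rcontinuity_abs.
    apply continuity_pt_comp. apply ss_cont. apply Rcontinuity_abs. }
  set (K := Rabs (mm Mx) + Rabs (ss Mx)) in *.
  assert (HK : forall r, 0 <= r <= T -> Rabs (mm r) <= K /\ Rabs (ss r) <= K).
  { intros r Hr. specialize (HMx r Hr). simpl in HMx. pose proof (Rabs_pos (mm r)). pose proof (Rabs_pos (ss r)). lra. }
  assert (HK0 : 0 <= K) by (unfold K; pose proof (Rabs_pos (mm Mx)); pose proof (Rabs_pos (ss Mx)); lra).
  set (KP := 1 + K + K / 2).
  assert (HPb : forall r w, 0 <= r <= T -> 0 <= w <= 1 -> Rabs (PP r w) <= KP).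
  { intros r w Hr Hw. destruct (HK r Hr) as [H1 H2].
    apply abs_bounds in H1. apply abs_bounds in H2.
    apply Rabs_le. unfold PP, KP.
    assert (0 <= (1 - w) ^ 2 <= 1) by (split; [apply pow_le|]; nra).
    split; nra. }
  set (cW := 1 + mu ^ 2 + mu ^ 3 + nu ^ 2 + nu ^ 3).
  assert (HcW : 0 <= cW) by (unfold cW; pose proof (pow_le mu 2 Hmu); pose proof (pow_le mu 3 Hmu);
     pose proof (pow_le nu 2 Hnu); pose proof (pow_le nu 3 Hnu); lra).
  set (L := cW * (3 * KP + 1) + 1).
  assert (HL : 0 <= L) by (unfold L, KP; nra).
  destruct (gronwall T L HT HL) as [Kfin [HKfin HG]].
  apply (extract (f T) (mm T) (ss T) Kfin); auto. apply Hpd; lra.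
  intros eps Heps.
  set (eps1 := eps / (2 * (K + 1))).
  assert (Heps1 : 0 < eps1) by (unfold eps1; apply Rdiv_lt_0_compat; lra).
  destruct (pd_C_unif pX HpX HmX eps1 Heps1) as [etaX [HetaX HX]].
  destruct (pd_C_unif pY HpY HmY eps1 Heps1) as [etaY [HetaY HY]].
  destruct (pd_C_unif f0 Hf0 Hm0 eps Heps) as [eta0 [Heta0 H0]].
  unfold F2 in HX, HY, H0. fold sX in HX. fold sY in HY.
  set (eta := Rmin (Rmin etaX etaY) eta0).
  assert (Heta : 0 < eta) by (unfold eta; repeat apply Rmin_glb_lt; lra).
  assert (HetaXYZ : eta <= etaX /\ eta <= etaY /\ eta <= eta0).
  { unfold eta. pose proof (Rmin_l (Rmin etaX etaY) eta0). pose proof (Rmin_r (Rmin etaX etaY) eta0).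
    pose proof (Rmin_l etaX etaY). pose proof (Rmin_r etaX etaY). lra. }
  set (F0 := (M2 f0 - M1 f0) / 2) in *.
  pose proof (F2_nn f0 Hf0 Hm0) as HF0. fold F0 in HF0.
  set (Ke := C1 K mu nu sX sY + (K * (sX + sY) / 2 + F0) / eta).
  assert (HC1 : 0 <= C1 K mu nu sX sY).
  { apply C1_nn; lra. }
  assert (HKe : 0 <= Ke).
  { unfold Ke. assert (0 <= (K * (sX + sY) / 2 + F0) / eta). apply Rdiv_le_0_compat; [nra|lra]. lra. }
  exists Ke. split; auto.
  assert (HE : forall r w, 0 <= r <= T -> 0 <= w <= 1 ->
    Rabs (PP r (gf pX w) * PP r (gf pY w) - PP r w - dPP r w) <= (1 - w) ^ 2 * (eps + Ke * (1 - w))).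
  { intros r w Hr Hw. destruct (HK r Hr) as [Hm Hs].
    pose proof (E_bound r w K Hm Hs Hw) as EB.
    destruct (gf_repr pX w HpX HmX Hw) as [_ [_ RX]].
    destruct (gf_repr pY w HpY HmY Hw) as [_ [_ RY]].
    fold sX in RX. fold sY in RY.
    specialize (HX w Hw). specialize (HY w Hw).
    set (rX := Series (fun k => pX k * Ck w k)) in *.
    set (rY := Series (fun k => pY k * Ck w k)) in *.
    assert (KE : K * (sX / 2 - rX + (sY / 2 - rY)) <= eps + (1 - w) * ((K * (sX + sY) / 2) / eta)).
    { apply small_split; try lra.
      - split. nra. assert (sX / 2 - rX + (sY / 2 - rY) <= (sX + sY) / 2) by lra.
        apply Rle_trans with (K * ((sX + sY) / 2)). apply Rmult_le_compat_l; lra. right; field.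
      - intros Hx. assert (sX / 2 - rX <= eps1) by (apply HX; lra).
        assert (sY / 2 - rY <= eps1) by (apply HY; lra).
        apply Rle_trans with (K * (2 * eps1)). apply Rmult_le_compat_l; lra.
        unfold eps1. apply Rle_trans with (eps * (K / (K + 1))). right; field; lra.
        assert (K / (K + 1) <= 1).
        { apply (Rmult_le_reg_l (K + 1)); [lra|]. replace ((K + 1) * (K / (K + 1))) with K by (field; lra). lra. }
        nra. }
    assert (0 <= (1 - w) ^ 2) by (apply pow_le; lra).
    assert (Hx3 : (1 - w) * ((K * (sX + sY) / 2) / eta) + (1 - w) * C1 K mu nu sX sY <= Ke * (1 - w)).
    { unfold Ke. assert ((K * (sX + sY) / 2) / eta <= (K * (sX + sY) / 2 + F0) / eta).
      { unfold Rdiv. apply Rmult_le_compat_r. apply Rlt_le, Rinv_0_lt_compat; lra. lra. }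
      nra. }
    apply Rle_trans with (1:=EB). apply Rmult_le_compat_l; auto. lra. }
  assert (Hg0 : forall w, gf (f 0) w = gf f0 w).
  { intro w. unfold gf. apply Series_ext. intro n. rewrite Hf00. reflexivity. }
  assert (HH0 : forall w, 0 <= w <= 1 -> Rabs (gf (f 0) w - PP 0 w) <= (1 - w) ^ 2 * (eps + Ke * (1 - w))).
  { intros w Hw. rewrite Hg0. destruct (gf_repr f0 w Hf0 Hm0 Hw) as [G0 [_ R0]].
    specialize (H0 w Hw). fold F0 in R0.
    set (r0 := Series (fun k => f0 k * Ck w k)) in *.
    assert (E : gf f0 w - PP 0 w = (1 - w) ^ 2 * (r0 - F0)).
    { rewrite G0. unfold PP. rewrite mm0, ss0. unfold F0, m0, S0. field. }
    rewrite E, Rabs_mult, Rabs_pos_eq by (apply pow_le; lra).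
    apply Rmult_le_compat_l. apply pow_le; lra.
    rewrite Rabs_left1 by lra.
    apply Rle_trans with (eps + (1 - w) * (F0 / eta)).
    apply small_split; try lra.
    unfold Ke. assert (F0 / eta <= C1 K mu nu sX sY + (K * (sX + sY) / 2 + F0) / eta).
    { assert (F0 / eta <= (K * (sX + sY) / 2 + F0) / eta).
      { unfold Rdiv. apply Rmult_le_compat_r. apply Rlt_le, Rinv_0_lt_compat; lra. nra. }
      lra. }
    nra. }
  intros z Hz.
  apply (small_lemma _ _ Kfin HKfin). intros d Hd.
  set (W := fun w => (1 - w) ^ 2 * (eps + Ke * (1 - w)) + d).
  assert (HWd : forall w, 0 <= w <= 1 -> d <= W w).
  { intros w Hw. unfold W. cbv beta. assert (0 <= (1 - w) ^ 2) by (apply pow_le; lra). assert (0 <= eps + Ke * (1 - w)) by nra. assert (0 <= (1 - w) ^ 2 * (eps + Ke * (1 - w))) by (apply Rmult_le_pos; lra). lra. }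
  assert (G := HG (fun r w => gf (f r) w - PP r w)
     (fun r w => gf (f r) (gf pX w) * gf (f r) (gf pY w) - gf (f r) w - dPP r w) W (1 + KP) d
     ltac:(lra) HWd).
  assert (Hg : forall r w, 0 <= r -> 0 <= w <= 1 -> 0 <= gf (f r) w <= 1).
  { intros r w Hr Hw. apply pd_gf_bnd; auto. }
  assert (HHb : forall r w, 0 <= r <= T -> 0 <= w <= 1 -> Rabs (gf (f r) w - PP r w) <= 1 + KP).
  { intros r w Hr Hw. pose proof (Hg r w ltac:(lra) Hw). pose proof (HPb r w Hr Hw).
    pose proof (Rabs_triang (gf (f r) w) (- PP r w)). rewrite Rabs_Ropp in H2.
    rewrite (Rabs_pos_eq (gf (f r) w)) in H2 by lra. unfold Rminus. lra. }
  specialize (G HHb).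
  assert (Hder : forall w, 0 <= w <= 1 -> forall r, 0 < r <= T ->
     is_derive (fun r => gf (f r) w - PP r w) r
       (gf (f r) (gf pX w) * gf (f r) (gf pY w) - gf (f r) w - dPP r w)).
  { intros w Hw r Hr.
    apply (is_derive_minus (fun r => gf (f r) w) (fun r => PP r w)).
    apply (proj2 (Hgf w Hw)); lra. apply PP_der. }
  specialize (G Hder).
  assert (Hrc : forall w, 0 <= w <= 1 ->
     filterlim (fun r => gf (f r) w - PP r w) (at_right 0) (locally (gf (f 0) w - PP 0 w))).
  { intros w Hw. rewrite Hg0. apply lim_minus.
    apply (proj1 (Hgf w Hw)).
    apply (cont_at_right (fun r => PP r w) 0). apply (proj1 (continuity_pt_filterlim (fun r => PP r w) 0)), PP_cont. }
  specialize (G Hrc).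
  assert (HdB : forall r Kb, 0 < r <= T -> 0 <= Kb ->
     (forall w, 0 <= w <= 1 -> Rabs (gf (f r) w - PP r w) <= Kb * W w) ->
     forall z, 0 <= z <= 1 ->
     Rabs (gf (f r) (gf pX z) * gf (f r) (gf pY z) - gf (f r) z - dPP r z) <= W z * (1 + L * Kb)).
  { intros r Kb Hr HKb HHr z' Hz'.
    destruct (gf_repr pX z' HpX HmX Hz') as [GA [UA RA]].
    destruct (gf_repr pY z' HpY HmY Hz') as [GB [UB RB]].
    fold mu in GA, UA. fold nu in GB, UB. fold sX in RA. fold sY in RB.
    set (A := gf pX z') in *. set (B := gf pY z') in *.
    assert (HA : 0 <= A <= 1) by (apply pd_gf_bnd; auto).
    assert (HB : 0 <= B <= 1) by (apply pd_gf_bnd; auto).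
    assert (HWz : 0 <= W z') by (pose proof (HWd z' Hz'); lra).
    assert (WA : W A <= cW * W z').
    { apply Rle_trans with ((1 + mu ^ 2 + mu ^ 3) * W z').
      unfold W. apply W_mono; try lra.
      rewrite GA. split. apply Rle_trans with ((1 - z') * 0). lra. 
      replace (1 - (1 - (1 - z') * (mu - (1 - z') * Series (fun k => pX k * Ck z' k))))
        with ((1 - z') * (mu - (1 - z') * Series (fun k => pX k * Ck z' k))) by ring.
      apply Rmult_le_compat_l; lra.
      replace (1 - (1 - (1 - z') * (mu - (1 - z') * Series (fun k => pX k * Ck z' k))))
        with ((1 - z') * (mu - (1 - z') * Series (fun k => pX k * Ck z' k))) by ring.
      rewrite (Rmult_comm mu). apply Rmult_le_compat_l. lra.
      assert (0 <= (1 - z') * Series (fun k => pX k * Ck z' k)) by (apply Rmult_le_pos; lra). lra.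
      apply Rmult_le_compat_r; auto. unfold cW.
      pose proof (pow_le nu 2 Hnu); pose proof (pow_le nu 3 Hnu); lra. }
    assert (WB : W B <= cW * W z').
    { apply Rle_trans with ((1 + nu ^ 2 + nu ^ 3) * W z').
      unfold W. apply W_mono; try lra.
      rewrite GB. split. apply Rle_trans with ((1 - z') * 0). lra. 
      replace (1 - (1 - (1 - z') * (nu - (1 - z') * Series (fun k => pY k * Ck z' k))))
        with ((1 - z') * (nu - (1 - z') * Series (fun k => pY k * Ck z' k))) by ring.
      apply Rmult_le_compat_l; lra.
      replace (1 - (1 - (1 - z') * (nu - (1 - z') * Series (fun k => pY k * Ck z' k))))
        with ((1 - z') * (nu - (1 - z') * Series (fun k => pY k * Ck z' k))) by ring.
      rewrite (Rmult_comm nu). apply Rmult_le_compat_l. lra.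
      assert (0 <= (1 - z') * Series (fun k => pY k * Ck z' k)) by (apply Rmult_le_pos; lra). lra.
      apply Rmult_le_compat_r; auto. unfold cW.
      pose proof (pow_le mu 2 Hmu); pose proof (pow_le mu 3 Hmu); lra. }
    assert (Id : gf (f r) A * gf (f r) B - gf (f r) z' - dPP r z' =
       (PP r A * PP r B - PP r z' - dPP r z') + (gf (f r) A - PP r A) * PP r B
       + PP r A * (gf (f r) B - PP r B) + (gf (f r) A - PP r A) * (gf (f r) B - PP r B)
       - (gf (f r) z' - PP r z')) by ring.
    rewrite Id. unfold L.
    apply comb_bound.
    - exact HWz.
    - exact HKb.
    - exact HcW.
    - apply Rle_trans with ((1 - z') ^ 2 * (eps + Ke * (1 - z'))). apply HE; auto. lra.
      unfold W. lra.
    - apply Rle_trans with (Kb * W A). apply HHr; auto. apply Rmult_le_compat_l; auto.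
    - apply Rle_trans with (Kb * W B). apply HHr; auto. apply Rmult_le_compat_l; auto.
    - apply HHb; auto; lra.
    - apply HPb; auto; lra.
    - apply HPb; auto; lra.
    - apply HHr; auto. }
  specialize (G HdB).
  specialize (G ltac:(intros w Hw; apply Rle_trans with (1 := HH0 w Hw); unfold W; lra)).
  specialize (G T z ltac:(lra) Hz).
  unfold W, PP in G.
  replace (Kfin * (1 - z) ^ 2 * (eps + Ke * (1 - z)) + d * Kfin)
    with (Kfin * ((1 - z) ^ 2 * (eps + Ke * (1 - z)) + d)) by ring.
  exact G.
Qed.

Lemma final_T t : 0 < t -> finite_M2 (f t) /\
  Varf (f t) = M2 f0 * exp (a2 * t) - m0 ^ 2 * exp (2 * a1 * t)
      + bet * m0 * phi a1 a2 t + 2 * gam * m0 ^ 2 * phi (2 * a1) a2 t.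
Proof.
  intros Ht. destruct (main_T t Ht) as [H1 [H2 H3]]. split; auto.
  unfold Varf. rewrite H2, H3. unfold ss, MM, mm.
  replace (exp (2 * a1 * t)) with (exp (a1 * t) ^ 2).
  unfold S0. ring.
  simpl. rewrite Rmult_1_r, <- exp_plus. f_equal; ring.
Qed.

End Main.

Theorem proposition3p6 (pX pY f0 : nat -> R) (f : R -> nat -> R) :
  is_pdens pX -> is_pdens pY ->
  pX 0%nat <> 1 -> pY 0%nat <> 1 ->
  finite_M2 pX -> finite_M2 pY ->
  is_pdens f0 -> finite_M2 f0 ->
  kinetic_solution pX pY f0 f ->
  let m0 := M1 f0 in
  let alpha1 := M1 pX + M1 pY - 1 in
  let alpha2 := (M1 pX) ^ 2 + (M1 pY) ^ 2 - 1 in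
  let beta := Varf pX + Varf pY in
  let gamma := M1 pX * M1 pY in
  forall t, 0 < t ->
    finite_M2 (f t) /\
    Varf (f t) =
      M2 f0 * exp (alpha2 * t) - m0 ^ 2 * exp (2 * alpha1 * t)
      + beta * m0 * phi alpha1 alpha2 t
      + 2 * gamma * m0 ^ 2 * phi (2 * alpha1) alpha2 t.
Proof.
  intros HpX HpY _ _ HmX HmY Hf0 Hm0 Hk m0 alpha1 alpha2 beta gamma t Ht.
  exact (final_T pX pY f0 f HpX HpY HmX HmY Hf0 Hm0 Hk t Ht).
Qed.
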